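(* Let $A\in\mathbb{R}^{m\times n}$ be semi-monotone (i.e. $A^{\dagger}\geq 0$). Let $A=B-C$ be a proper weak regular splitting and $A=U-V$ a proper regular splitting of $A$. If $B^{\dagger}\geq U^{\dagger}$ and all row sums of $U^{\dagger}$ are positive, then $$\rho(B^{\dagger}C)\leq \rho(U^{\dagger}V)<1.$$
   Context: All matrices are real. $X^{\dagger}$ denotes the Moore–Penrose inverse of $X$, and $\rho(\cdot)$ the spectral radius. For a matrix $X$, $X\geq 0$ means that all entries of $X$ are nonnegative and at least one entry is positive; $X\geq Y$ means $X-Y\geq 0$. $R(X)$ and $N(X)$ denote range and null space. A splitting $A=U-V$ is proper if $R(U)=R(A)$ and $N(U)=N(A)$. It is a proper regular splitting if it is proper, $U^{\dagger}\geq 0$ and $V\geq 0$; it is a proper weak regular splitting if it is proper, $U^{\dagger}\geq 0$ and $U^{\dagger}V\geq 0$. *)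

(* Defs.v *)
From HB Require Import structures.
From mathcomp Require Import all_boot all_order all_algebra.
From mathcomp Require Import complex.
From mathcomp Require Import reals.
From Stdlib Require Import ClassicalEpsilon.
Set Implicit Arguments. Unset Strict Implicit. Unset Printing Implicit Defensive.
Import Order.TTheory GRing.Theory Num.Theory.
Local Open Scope ring_scope.

Definition is_MP_inverse (R : realType) (m n : nat)
    (A : 'M[R]_(m, n)) (X : 'M[R]_(n, m)) : Prop :=
  [/\ A *m X *m A = A, X *m A *m X = X,
      (A *m X)^T = A *m X & (X *m A)^T = X *m A].

(* The Moore-Penrose inverse A^dagger (it exists and is unique for real
   matrices; chosen by classical choice). *)
Definition mpinv (R : realType) (m n : nat) (A : 'M[R]_(m, n)) : 'M[R]_(n, m) :=
  epsilon (inhabits 0) (is_MP_inverse A).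

Definition mx_nonneg (R : realType) (m n : nat) (X : 'M[R]_(m, n)) : Prop :=
  (forall i j, 0 <= X i j) /\ (exists i j, 0 < X i j).

Definition mx_ge (R : realType) (m n : nat) (X Y : 'M[R]_(m, n)) : Prop :=
  mx_nonneg (X - Y).

Definition range_mx (R : realType) (m n : nat) (X : 'M[R]_(m, n))
    (y : 'cV[R]_m) : Prop := exists x : 'cV[R]_n, y = X *m x.
Definition null_mx (R : realType) (m n : nat) (X : 'M[R]_(m, n))
    (x : 'cV[R]_n) : Prop := X *m x = 0.

Definition proper_splitting (R : realType) (m n : nat)
    (A U V : 'M[R]_(m, n)) : Prop :=
  [/\ A = U - V,
      (forall y, range_mx U y <-> range_mx A y) &
      (forall x, null_mx U x <-> null_mx A x)].

Definition proper_regular_splitting (R : realType) (m n : nat)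
    (A U V : 'M[R]_(m, n)) : Prop :=
  [/\ proper_splitting A U V, mx_nonneg (mpinv U) & mx_nonneg V].

Definition proper_weak_regular_splitting (R : realType) (m n : nat)
    (A U V : 'M[R]_(m, n)) : Prop :=
  [/\ proper_splitting A U V, mx_nonneg (mpinv U) & mx_nonneg (mpinv U *m V)].

Definition semi_monotone (R : realType) (m n : nat) (A : 'M[R]_(m, n)) : Prop :=
  mx_nonneg (mpinv A).

(* Complex eigenvalues (with multiplicity) of a real square matrix: the roots
   in R[i] of its characteristic polynomial. *)
Definition eigenvalues (R : realType) (n : nat) (M : 'M[R]_n) : seq R[i] :=
  sval (closed_field_poly_normal (map_poly (real_complex R) (char_poly M))).

Definition cmod (R : realType) (z : R[i]) : R :=
  Num.sqrt (complex.Re z ^+ 2 + complex.Im z ^+ 2).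

(* Spectral radius: maximum modulus of the eigenvalues (0 if n = 0). *)
Definition spectral_radius (R : realType) (n : nat) (M : 'M[R]_n) : R :=
  \big[Num.max/0]_(z <- eigenvalues M) cmod z.

(* Main.v *)
Require Import Defs.
From HB Require Import structures.
From mathcomp Require Import all_boot all_order all_algebra complex reals.
From Stdlib Require Import ClassicalEpsilon.
From mathcomp Require Import ring lra polyrcf.
Import Order.TTheory GRing.Theory Num.Theory.
Local Open Scope ring_scope.
Set Implicit Arguments. Unset Strict Implicit. Unset Printing Implicit Defensive.

Section MP.
Variable R : realType.

Lemma gram_unit (p q : nat) (M : 'M[R]_(p, q)) :
  row_free M -> M *m M^T \in unitmx.
Proof.
move=> fM; rewrite unitmxE unitfE; apply/negP => /det0P [v vn0 vM].
have h : (v *m M) *m (v *m M)^T = 0.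
  by rewrite trmx_mul mulmxA -(mulmxA v) vM mul0mx.
have : v *m M = 0.
  apply/matrixP => i j; rewrite [RHS]mxE ord1.
  have h2 := congr1 (fun X : 'M[R]_1 => X ord0 ord0) h; move: h2 => /=.
  rewrite [X in X = _]mxE [X in _ = X]mxE => /eqP; rewrite psumr_eq0; last first.
    by move=> k _; rewrite [in X in _ * X]mxE -expr2 sqr_ge0.
  move=> /allP /(_ j (mem_index_enum _)) /implyP /(_ isT).
  by rewrite [in X in _ * X]mxE mulf_eq0 orbb => /eqP.
by move/eqP; rewrite mulmx_free_eq0 // (negPf vn0).
Qed.

Lemma mp_exists (m n : nat) (A : 'M[R]_(m, n)) : exists X, is_MP_inverse A X.
Proof.
set F := col_base A; set G := row_base A.
have hF : F^T *m F \in unitmx.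
  have := @gram_unit _ _ F^T; rewrite trmxK; apply.
  by rewrite /row_free mxrank_tr; exact: col_base_full.
have hG : G *m G^T \in unitmx by apply: gram_unit; exact: row_base_free.
have eA : A = F *m G by rewrite mulmx_base.
clearbody F G.
move: F G hF hG eA; generalize (\rank A) => r F G hF hG eA.
set IG := invmx (G *m G^T); set IF := invmx (F^T *m F).
have kG : forall p (Y : 'M_(r, p)), G *m (G^T *m (IG *m Y)) = Y.
  by move=> p Y; rewrite /IG !mulmxA (mulmxV hG) mul1mx.
have kF : forall p (Y : 'M_(r, p)), IF *m (F^T *m (F *m Y)) = Y.
  by move=> p Y; rewrite /IF !mulmxA -(mulmxA _ F^T F) (mulVmx hF) mul1mx.
have tG : IG^T = IG by rewrite /IG trmx_inv trmx_mul trmxK.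
have tF : IF^T = IF by rewrite /IF trmx_inv trmx_mul trmxK.
clearbody IG IF.
exists (G^T *m (IG *m (IF *m F^T))).
rewrite eA; split.
- by rewrite -!mulmxA kG kF.
- by rewrite -!mulmxA kF kG.
- by rewrite -!mulmxA kG !trmx_mul trmxK tF mulmxA.
- by rewrite -!mulmxA kF !trmx_mul trmxK tG !mulmxA.
Qed.

Lemma mpinvP (m n : nat) (A : 'M[R]_(m, n)) : is_MP_inverse A (mpinv A).
Proof.
rewrite /mpinv; apply: epsilon_spec.
have [X hX] := mp_exists A; by exists X.
Qed.

End MP.

Section Proj.
Variable R : realType.

Lemma col_mulmx (m n p : nat) (A : 'M[R]_(m, n)) (B : 'M[R]_(n, p)) j :
  col j (A *m B) = A *m col j B.
Proof. by rewrite !colE mulmxA. Qed.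

Lemma range_cols (m n p : nat) (U : 'M[R]_(m, n)) (M : 'M[R]_(m, p)) :
  (forall j, range_mx U (col j M)) -> exists X, M = U *m X.
Proof.
move=> h; have [f hf] := fin_all_exists h.
exists (\matrix_(i, j) f j i ord0); apply/matrixP => i j.
have e := congr1 (fun X : 'cV[R]_m => X i ord0) (hf j).
rewrite /= [col _ _ _ _]mxE in e; rewrite e [LHS]mxE [RHS]mxE.
by apply: eq_bigr => k _; rewrite mxE.
Qed.

Lemma null_cols (m n p : nat) (U : 'M[R]_(m, n)) (M : 'M[R]_(n, p)) :
  (forall j, null_mx U (col j M)) -> U *m M = 0.
Proof.
move=> h; apply/matrixP => i j.
have e := congr1 (fun X : 'cV[R]_m => X i ord0) (h j).
rewrite /= [in RHS]mxE in e; rewrite [RHS]mxE -e [LHS]mxE [RHS]mxE.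
by apply: eq_bigr => k _; rewrite mxE.
Qed.

Lemma proper_proj (m n : nat) (A U V : 'M[R]_(m, n)) :
  proper_splitting A U V ->
  mpinv U *m U = mpinv A *m A /\ U *m mpinv U = A *m mpinv A.
Proof.
case=> _ hR hN.
have [u1 u2 u3 u4] := mpinvP U; have [a1 a2 a3 a4] := mpinvP A.
set Ud := mpinv U in u1 u2 u3 u4 *; set Ad := mpinv A in a1 a2 a3 a4 *.
split.
- set G1 := Ud *m U; set G2 := Ad *m A.
  have e1 : A *m (1%:M - G1) = 0.
    apply: null_cols => j; apply/hN; rewrite /null_mx -col_mulmx.
    by rewrite mulmxBr mulmx1 /G1 mulmxA u1 subrr; apply/matrixP => i k; rewrite !mxE.
  have e2 : U *m (1%:M - G2) = 0.
    apply: null_cols => j; apply/(hN _).2; rewrite /null_mx -col_mulmx.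
    by rewrite mulmxBr mulmx1 /G2 mulmxA a1 subrr; apply/matrixP => i k; rewrite !mxE.
  have f1 : G2 = G2 *m G1.
    by apply/eqP; rewrite -subr_eq0 -{1}(mulmx1 G2) -mulmxBr /G2 -mulmxA e1 mulmx0.
  have f2 : G1 = G1 *m G2.
    by apply/eqP; rewrite -subr_eq0 -{1}(mulmx1 G1) -mulmxBr /G1 -mulmxA e2 mulmx0.
  have t1 : G1^T = G1 by exact: u4.
  have t2 : G2^T = G2 by exact: a4.
  by rewrite -t1 f2 trmx_mul t1 t2 -f1.
- set E := U *m Ud; set Fq := A *m Ad.
  have [X hX] : exists X, Fq = U *m X.
    by apply: range_cols => j; apply/(hR _).2; rewrite /Fq col_mulmx; eexists.
  have [Y hY] : exists Y, E = A *m Y.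
    by apply: range_cols => j; apply/(hR _).1; rewrite /E col_mulmx; eexists.
  have f1 : E *m Fq = Fq by rewrite hX mulmxA /E u1.
  have f2 : Fq *m E = E by rewrite hY mulmxA /Fq a1.
  have t1 : E^T = E by exact: u3.
  have t2 : Fq^T = Fq by exact: a3.
  by rewrite -t1 -f2 trmx_mul t1 t2 f1.
Qed.

End Proj.

Import ComplexField.Normc.
Section Eig.
Variable R : realType.
Local Notation C := (R[i]).

Lemma normc_sum (I : Type) (r : seq I) (F : I -> C) :
  normc (\sum_(i <- r) F i) <= \sum_(i <- r) normc (F i).
Proof.
elim/big_rec2: _ => [|i y1 y2 _ h]; first by rewrite normc0.
by apply: le_trans (le_normcD _ _) _; rewrite lerD2l.
Qed.

Lemma normc_real (r : R) : normc (real_complex R r) = `|r|.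
Proof. by rewrite /normc /= expr0n addr0 sqrtr_sqr. Qed.

Lemma normc_ge0 (z : C) : 0 <= normc z.
Proof. by case: z => a b; rewrite /normc sqrtr_ge0. Qed.

Lemma cmod_normc (z : C) : cmod z = normc z.
Proof. by case: z. Qed.

Lemma eigenvalues_eig (n : nat) (M : 'M[R]_n) z :
  z \in eigenvalues M ->
  exists2 v : 'rV[C]_n, v *m map_mx (real_complex R) M = z *: v & v != 0.
Proof.
rewrite /eigenvalues; case: closed_field_poly_normal => s /= hs hz.
apply/eigenvalueP; rewrite eigenvalue_root_char -map_char_poly hs.
have hn : map_poly (real_complex R) (char_poly M) != 0.
  by rewrite map_poly_eq0 monic_neq0 // char_poly_monic.
rewrite rootZ ?root_prod_XsubC //.
by rewrite lead_coef_eq0.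
Qed.

End Eig.

Section Bound.
Variable R : realType.
Local Notation C := (R[i]).

Lemma pos_sum_gt0 (n : nat) (a x : 'I_n -> R) j :
  (forall i, 0 <= a i) -> (forall i, 0 <= x i) -> 0 < a j -> 0 < x j ->
  0 < \sum_i a i * x i.
Proof.
move=> a0 x0 aj xj; rewrite (bigD1 j) //=.
apply: ltr_wpDr; first by apply: sumr_ge0 => i _; rewrite mulr_ge0.
by rewrite mulr_gt0.
Qed.

Lemma eig_bound (n : nat) (M : 'M[R]_n) (x d : 'cV[R]_n) (al : R) :
  (forall i j, 0 <= M i j) -> (forall i, 0 < x i ord0) ->
  (forall i, 0 <= d i ord0) ->
  (forall i, (M *m x) i ord0 <= al * x i ord0 - d i ord0) ->
  forall z, z \in eigenvalues M ->
  cmod z <= al /\ ((forall i, 0 < d i ord0) -> cmod z < al).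
Proof.
move=> M0 x0 d0 hM z /eigenvalues_eig [v hv vn0].
rewrite cmod_normc.
pose a := fun j => normc (v ord0 j).
have a0 : forall j, 0 <= a j by move=> j; exact: normc_ge0.
have ha : forall j, normc z * a j <= \sum_i a i * M i j.
  move=> j; have e := congr1 (fun X : 'rV[C]_n => X ord0 j) hv.
  rewrite /= [LHS]mxE [RHS]mxE in e.
  rewrite /a -normcM -e; apply: (le_trans (normc_sum _ _)).
  apply: ler_sum => i _; rewrite mxE normcM normc_real ger0_norm //.
have [j hj] : exists j, v ord0 j != 0.
  apply/existsP; apply: contraR vn0 => /existsPn h; apply/eqP/matrixP => i k.
  by rewrite ord1 mxE; apply/eqP; move: (h k); rewrite negbK.
have aj : 0 < a j.
  rewrite lt_def a0 andbT; apply/eqP => /eq0_normc; exact/eqP.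
set S := \sum_i a i * x i ord0.
have S0 : 0 < S by apply: (pos_sum_gt0 (j := j)) => // i; exact: ltW.
set D := \sum_i a i * d i ord0.
have D0 : 0 <= D by apply: sumr_ge0 => i _; rewrite mulr_ge0.
have key : normc z * S <= al * S - D.
  rewrite /S mulr_sumr.
  apply: (@le_trans _ _ (\sum_i (\sum_k a k * M k i) * x i ord0)).
    by apply: ler_sum => i _; rewrite mulrA ler_wpM2r // ltW.
  rewrite (eq_bigr (fun i => \sum_k a k * M k i * x i ord0)); last first.
    by move=> i _; rewrite mulr_suml.
  rewrite exchange_big /= mulr_sumr /D -sumrB; apply: ler_sum => k _.
  rewrite (eq_bigr (fun i => a k * (M k i * x i ord0))); last first.
    by move=> i _; rewrite mulrA.
  rewrite -mulr_sumr mulrA (mulrC al) -mulrA -mulrBr; apply: ler_wpM2l => //.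
  by have := hM k; rewrite mxE.
split; first by nra.
move=> dpos; have : 0 < D by apply: (pos_sum_gt0 (j := j)) => // i; exact: ltW.
by nra.
Qed.

End Bound.

Section Rho.
Variable R : realType.

Lemma rho_le (n : nat) (M : 'M[R]_n) (a : R) : 0 <= a ->
  (forall z, z \in eigenvalues M -> cmod z <= a) -> spectral_radius M <= a.
Proof.
move=> a0 h; rewrite /spectral_radius big_seq.
by apply: bigmax_le => // z; exact: h.
Qed.

Lemma rho_lt (n : nat) (M : 'M[R]_n) (a : R) : 0 < a ->
  (forall z, z \in eigenvalues M -> cmod z < a) -> spectral_radius M < a.
Proof.
move=> a0 h; rewrite /spectral_radius big_seq.
by apply: bigmax_lt => // z; exact: h.
Qed.

Lemma rho_ge0 (n : nat) (M : 'M[R]_n) : 0 <= spectral_radius M.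
Proof.
rewrite /spectral_radius; elim/big_rec: _ => // z y _ hy.
by rewrite le_max hy orbT.
Qed.

Lemma eig_lower (n : nat) (M : 'M[R]_n) (lam : R) (y : 'cV[R]_n) :
  y != 0 -> M *m y = lam *: y -> `|lam| <= spectral_radius M.
Proof.
move=> yn0 hy.
have hd : \det ((lam%:M - M)^T) == 0.
  apply/det0P; exists y^T; first by rewrite trmx_eq0.
  by rewrite -trmx_mul mulmxBl mul_scalar_mx hy subrr trmx0.
rewrite det_tr in hd; move/det0P: hd => [v vn0 hv].
have ev : eigenvalue M lam.
  apply/eigenvalueP; exists v => //.
  by apply/eqP; rewrite eq_sym -subr_eq0 -mul_mx_scalar -mulmxBr hv.
rewrite eigenvalue_root_char in ev.
have hin : real_complex R lam \in eigenvalues M.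
  rewrite /eigenvalues; case: closed_field_poly_normal => s /= hs.
  have := rmorph_root (real_complex R) ev; rewrite hs rootZ ?root_prod_XsubC //.
  have hn : map_poly (real_complex R) (char_poly M) != 0.
    by rewrite map_poly_eq0 monic_neq0 // char_poly_monic.
  by rewrite lead_coef_eq0.
rewrite /spectral_radius; apply: le_trans (le_bigmax_seq _ _ _ _ hin isT).
by rewrite cmod_normc normc_real.
Qed.

End Rho.

Section Zmat.
Variable R : realType.

Lemma zmx_nonneg (n : nat) (Z : 'M[R]_n) (x y : 'cV[R]_n) :
  (forall i j, i != j -> Z i j <= 0) -> (forall i, 0 < x i ord0) ->
  (forall i, 0 < (Z *m x) i ord0) ->
  (forall i, 0 <= (Z *m y) i ord0) -> forall i, 0 <= y i ord0.
Proof.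
move=> hZ hx hZx hZy i; rewrite leNgt; apply/negP => yi.
pose F k := - y k ord0 / x k ord0.
have := @arg_maxP _ _ _ i xpredT F isT; case=> k _ hk.
set t := F k.
have Fi : 0 < F i by rewrite /F divr_gt0 // oppr_gt0.
have t0 : 0 < t by apply: lt_le_trans Fi (hk i isT).
pose u := y + t *: x.
have uj : forall j, 0 <= u j ord0.
  move=> j; rewrite /u !mxE addrC -[y j ord0]opprK subr_ge0.
  by rewrite -ler_pdivrMr //; exact: (hk j isT).
have uk : u k ord0 = 0.
  by rewrite /u !mxE /t /F divfK ?subrr // gt_eqF.
have h1 : 0 < (Z *m u) k ord0.
  rewrite /u mulmxDr -scalemxAr mxE [X in _ + X]mxE.
  by apply: ltr_wpDl; [exact: hZy | rewrite mulr_gt0].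
have h2 : (Z *m u) k ord0 <= 0.
  rewrite mxE; apply: sumr_le0 => j _.
  have [-> | njk] := eqVneq j k; first by rewrite uk mulr0.
  by apply: mulr_le0_ge0 => //; apply: hZ; rewrite eq_sym.
by move: (lt_le_trans h1 h2); rewrite ltxx.
Qed.

Lemma zmx_inj (n : nat) (Z : 'M[R]_n) (x : 'cV[R]_n) :
  (forall i j, i != j -> Z i j <= 0) -> (forall i, 0 < x i ord0) ->
  (forall i, 0 < (Z *m x) i ord0) -> Z \in unitmx.
Proof.
move=> hZ hx hZx; rewrite unitmxE unitfE -det_tr.
apply/negP => /det0P [v vn0 hv]; apply/negP: vn0; rewrite negbK.
have hZv : Z *m v^T = 0 by rewrite -[Z]trmxK -trmx_mul hv trmx0.
apply/eqP/matrixP => a b; rewrite mxE ord1.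
have p1 := zmx_nonneg hZ hx hZx (y := v^T).
have p2 := zmx_nonneg hZ hx hZx (y := - v^T).
have e1 : 0 <= v^T b ord0 by apply: p1 => i; rewrite hZv mxE.
have e2 : 0 <= (- v^T) b ord0 by apply: p2 => i; rewrite mulmxN hZv oppr0 mxE.
rewrite !mxE in e1 e2; apply/eqP; rewrite eq_le e1 andbT.
by rewrite -oppr_ge0.
Qed.

End Zmat.

Section PF.
Variable R : realType.

Lemma poly_right_ge0 (q : {poly R}) (a : R) :
  (forall s, a < s -> 0 <= q.[s]) -> 0 <= q.[a].
Proof.
move=> h; rewrite leNgt; apply/negP => qa.
have qa' : 0 < - q.[a] by rewrite oppr_gt0.
have [d d0 hd] := @poly_cont R a q (- q.[a]) qa'.
have hs : `|(a + d / 2) - a| < d.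
  rewrite addrC addKr ger0_norm ?divr_ge0 ?ltW //.
  by rewrite ltr_pdivrMr // ltr_pMr // ltr1n.
have := hd _ hs; have := h (a + d / 2).
rewrite ltrDl divr_gt0 // => /(_ isT) hq.
rewrite ltr_norml => /andP [_]; rewrite ltrBlDr addNr.
by rewrite ltNge hq.
Qed.

Lemma eval_cpmx (n : nat) (N : 'M[R]_n) (s : R) :
  map_mx (horner_eval s) (char_poly_mx N) = s%:M - N.
Proof.
apply/matrixP => i j; rewrite /char_poly_mx !mxE horner_evalE.
by rewrite hornerD hornerN hornerMn hornerX hornerC.
Qed.

Lemma eval_cp (n : nat) (N : 'M[R]_n) (s : R) :
  (char_poly N).[s] = \det (s%:M - N).
Proof. by rewrite -horner_evalE /char_poly -det_map_mx eval_cpmx. Qed.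

Lemma eval_adj (n : nat) (N : 'M[R]_n) (s : R) i :
  ((\adj (char_poly_mx N) *m (const_mx 1 : 'cV[{poly R}]_n)) i ord0).[s] =
  (\adj (s%:M - N) *m (const_mx 1 : 'cV[R]_n)) i ord0.
Proof.
rewrite -horner_evalE -[in RHS]eval_cpmx -map_mx_adj.
have e1 : (const_mx 1 : 'cV[R]_n) = map_mx (horner_eval s) (const_mx 1).
  by rewrite map_const_mx rmorph1.
rewrite [in RHS]e1.
by rewrite -map_mxM [RHS]mxE.
Qed.

End PF.

Section PF2.
Variable R : realType.

Lemma mul_one_col (n : nat) (N : 'M[R]_n) i :
  (N *m (const_mx 1 : 'cV[R]_n)) i ord0 = \sum_j N i j.
Proof. by rewrite mxE; apply: eq_bigr => j _; rewrite mxE mulr1. Qed.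

Lemma adj_sol (n : nat) (Z : 'M[R]_n) : \det Z != 0 ->
  Z *m ((\det Z)^-1 *: (\adj Z *m (const_mx 1 : 'cV[R]_n))) = const_mx 1.
Proof.
move=> hd; rewrite -scalemxAr mulmxA mul_mx_adj mul_scalar_mx scalerA.
by rewrite mulVf // scale1r.
Qed.

Lemma shiftZ (n : nat) (N : 'M[R]_n) (s : R) (x : 'cV[R]_n) i :
  ((s%:M - N) *m x) i ord0 = s * x i ord0 - (N *m x) i ord0.
Proof. by rewrite mulmxBl mul_scalar_mx !mxE. Qed.

Lemma shift_offd (n : nat) (N : 'M[R]_n) (s : R) :
  (forall i j, 0 <= N i j) -> forall i j, i != j -> (s%:M - N) i j <= 0.
Proof. by move=> N0 i j ij; rewrite !mxE (negPf ij) mulr0n sub0r oppr_le0. Qed.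

Lemma mulmx_ge0 (n : nat) (N : 'M[R]_n) (x : 'cV[R]_n) i :
  (forall i j, 0 <= N i j) -> (forall i, 0 <= x i ord0) -> 0 <= (N *m x) i ord0.
Proof. by move=> N0 x0; rewrite mxE; apply: sumr_ge0 => j _; rewrite mulr_ge0. Qed.

Lemma arith1 (a dd : R) : dd != 0 -> 0 <= dd^-1 * a -> 0 <= a * dd.
Proof.
move=> hdd h; have -> : a * dd = (dd^-1 * a) * (dd * dd) by field.
by rewrite mulr_ge0 // -expr2 sqr_ge0.
Qed.

Lemma arith2 (a dd : R) : dd != 0 -> 0 <= a * dd -> 0 <= dd^-1 * a.
Proof.
move=> hdd h; have -> : dd^-1 * a = (a * dd) * (dd^-1 * dd^-1) by field.
by rewrite mulr_ge0 // -expr2 sqr_ge0.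
Qed.

Lemma pf_lite (n : nat) (N : 'M[R]_n) (i0 : 'I_n) : (forall i j, 0 <= N i j) ->
  exists r : R, [/\ 0 <= r, (exists2 y : 'cV[R]_n, y != 0 & N *m y = r *: y) &
    forall nu, r < nu -> exists x : 'cV[R]_n,
      (forall i, 0 < x i ord0) /\ (forall i, (N *m x) i ord0 < nu * x i ord0)].
Proof.
move=> N0.
pose S : classical_sets.set R := fun s => exists x : 'cV[R]_n,
  (forall i, 0 < x i ord0) /\ (forall i, (N *m x) i ord0 < s * x i ord0).
have Sne : classical_sets.nonempty S.
  exists (1 + \sum_i \sum_j N i j), (const_mx 1); split => i.
    by rewrite mxE ltr01.
  rewrite mul_one_col mxE mulr1.
  have : \sum_j N i j <= \sum_i \sum_j N i j.
    rewrite [X in _ <= X](bigD1 i) //= lerDl; apply: sumr_ge0 => k _.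
    by apply: sumr_ge0 => j _.
  by move=> h; apply: le_lt_trans h _; rewrite ltrDr ltr01.
have lb : classical_sets.lbound S 0.
  move=> s [x [xp hx]]; have := hx i0.
  have h0 : 0 <= (N *m x) i0 ord0 by apply: mulmx_ge0 => // i; exact: ltW.
  move=> h; have : 0 < s * x i0 ord0 by apply: le_lt_trans h0 h.
  by rewrite pmulr_lgt0 // => /ltW.
have hlb : classical_sets.has_lbound S by exists 0.
set r := inf S.
have r0 : 0 <= r by apply: lb_le_inf.
have up : forall nu, r < nu -> S nu.
  move=> nu /(inf_lt Sne) [s [x [xp hx]] snu]; exists x; split => // i.
  by apply: lt_le_trans (hx i) _; rewrite ler_pM2r // ltW.
have unitS : forall s, S s -> \det (s%:M - N) != 0.
  move=> s [x [xp hx]]; rewrite -unitfE -unitmxE.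
  apply: (zmx_inj (x := x)) => //; first exact: shift_offd.
  by move=> i; rewrite shiftZ subr_gt0.
have solS : forall s, S s -> forall i,
    0 <= ((\det (s%:M - N))^-1 *: (\adj (s%:M - N) *m (const_mx 1 : 'cV[R]_n))) i ord0.
  move=> s Ss; have hd := unitS s Ss; case: Ss => x [xp hx].
  apply: (zmx_nonneg (Z := s%:M - N) (x := x)) => //; first exact: shift_offd.
    by move=> i; rewrite shiftZ subr_gt0.
  by move=> i; rewrite adj_sol // mxE ler01.
have hdet : \det (r%:M - N) = 0.
  apply/eqP; apply/negPn/negP => hd.
  have qr : forall i, 0 <= ((\adj (r%:M - N) *m (const_mx 1 : 'cV[R]_n)) i ord0) * \det (r%:M - N).
    move=> i; rewrite -eval_adj -eval_cp -hornerM; apply: poly_right_ge0 => s rs.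
    rewrite hornerM eval_adj eval_cp.
    have := solS s (up s rs) i; rewrite mxE.
    by apply: arith1; apply: unitS; exact: up.
  pose y0 := (\det (r%:M - N))^-1 *: (\adj (r%:M - N) *m (const_mx 1 : 'cV[R]_n)).
  have y0ge : forall i, 0 <= y0 i ord0.
    by move=> i; rewrite /y0 mxE; apply: (arith2 hd); exact: qr.
  have hy0 : forall i, r * y0 i ord0 - (N *m y0) i ord0 = 1.
    by move=> i; rewrite -shiftZ /y0 adj_sol // mxE.
  have ry : forall i, 1 <= r * y0 i ord0.
    move=> i; have := hy0 i; have := mulmx_ge0 i N0 y0ge; lra.
  have rpos : 0 < r.
    rewrite lt_def r0 andbT; apply/eqP => r00; have := ry i0.
    by rewrite r00 mul0r ler10.
  have y0pos : forall i, 0 < y0 i ord0.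
    move=> i; have : 0 < r * y0 i ord0 by apply: lt_le_trans (ry i); exact: ltr01.
    by rewrite pmulr_rgt0.
  pose K := 1 + \sum_i y0 i ord0.
  have yK : forall i, y0 i ord0 < K.
    move=> i; rewrite /K (bigD1 i) //=.
    have : 0 <= \sum_(j < n | j != i) y0 j ord0.
      by apply: sumr_ge0 => j _; exact: ltW.
    lra.
  have K0 : 0 < K by apply: lt_trans (yK i0); exact: y0pos.
  have Ss : S (r - K^-1).
    exists y0; split => // i.
    have h1 : y0 i ord0 * K^-1 < 1 by rewrite ltr_pdivrMr // mul1r.
    have := hy0 i; rewrite mulrBl (mulrC K^-1); lra.
  have := ge_inf hlb Ss; rewrite -/r.
  have : 0 < K^-1 by rewrite invr_gt0.
  lra.
have hd : \det ((r%:M - N)^T) == 0 by rewrite det_tr hdet.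
move/det0P: hd => [v vn0 hv].
exists r; split => //.
  exists v^T; first by rewrite trmx_eq0.
  have : (r%:M - N) *m v^T = 0 by rewrite -[_ - _]trmxK -trmx_mul hv trmx0.
  by rewrite mulmxBl mul_scalar_mx => /eqP; rewrite subr_eq0 eq_sym => /eqP.

Qed.

End PF2.

Section Aux.
Variable R : realType.

Lemma mul_one_colR (n m : nat) (N : 'M[R]_(n, m)) i :
  (N *m (const_mx 1 : 'cV[R]_m)) i ord0 = \sum_j N i j.
Proof. by rewrite mxE; apply: eq_bigr => j _; rewrite mxE mulr1. Qed.

Lemma mulmx_ge0R (n m p : nat) (N : 'M[R]_(n, m)) (x : 'M[R]_(m, p)) i k :
  (forall i j, 0 <= N i j) -> (forall i j, 0 <= x i j) -> 0 <= (N *m x) i k.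
Proof. by move=> N0 x0; rewrite mxE; apply: sumr_ge0 => j _; rewrite mulr_ge0. Qed.

Lemma mxEsub (p q : nat) (X Y : 'M[R]_(p, q)) i j : (X - Y) i j = X i j - Y i j.
Proof. by rewrite !mxE. Qed.
Lemma mxEadd (p q : nat) (X Y : 'M[R]_(p, q)) i j : (X + Y) i j = X i j + Y i j.
Proof. by rewrite !mxE. Qed.
Lemma mxEscale (p q : nat) (c : R) (X : 'M[R]_(p, q)) i j : (c *: X) i j = c * X i j.
Proof. by rewrite !mxE. Qed.

Lemma mx0E (p q : nat) i j : (0 : 'M[R]_(p, q)) i j = 0.
Proof. by rewrite mxE. Qed.

Lemma arith3 (r eps : R) : 0 <= r -> 0 < eps ->
  (r + eps) / (1 + (r + eps)) <= r / (1 + r) + eps.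
Proof.
move=> r0 e0.
have h1 : 0 < 1 + r by lra.
have h2 : 0 < 1 + (r + eps) by lra.
have -> : (r + eps) / (1 + (r + eps)) =
   r / (1 + r) + eps / ((1 + r) * (1 + (r + eps))).
  by field; apply/andP; split; rewrite gt_eqF.
rewrite lerD2l ler_pdivrMr ?mulr_gt0 //.
have : 1 <= (1 + r) * (1 + (r + eps)) by nra.
nra.
Qed.

Lemma arith4 (nu a y p : R) : 0 < nu -> 0 <= p ->
  a = y - nu^-1 * (a + p) -> a <= nu / (1 + nu) * y.
Proof.
move=> n0 p0 h.
have h1 : 0 < 1 + nu by lra.
have e : a * (1 + nu) = nu * y - p.
  have : nu * a = nu * y - (a + p).
    by rewrite {1}h mulrBr mulrA divff ?gt_eqF // mul1r.
  lra.
rewrite mulrAC ler_pdivlMr //; lra.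
Qed.

End Aux.

Theorem theorem3p10 (R : realType) (m n : nat) (A B C U V : 'M[R]_(m, n)) :
  semi_monotone A ->
  proper_weak_regular_splitting A B C ->
  proper_regular_splitting A U V ->
  mx_ge (mpinv B) (mpinv U) ->
  (forall i : 'I_n, 0 < \sum_(j < m) mpinv U i j) ->
  spectral_radius (mpinv B *m C) <= spectral_radius (mpinv U *m V) /\
  spectral_radius (mpinv U *m V) < 1.
Proof.
move=> [Ad0 [i0 [j0 _]]] [psB [Bd0 _] [BC0 _]] [psU [Ud0 _] [V0 _]] [hBU _] hrow.
have [pU1 pU2] := proper_proj psU; have [pB1 pB2] := proper_proj psB.
have [u1 u2 _ _] := mpinvP U; have [b1 b2 _ _] := mpinvP B.
have [a1 a2 _ _] := mpinvP A.
case: psU => eU _ _; case: psB => eB _ _.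
have eV : V = U - A by rewrite eU opprB addrC subrK.
have eC : C = B - A by rewrite eB opprB addrC subrK.
move: hBU Ad0 Bd0 BC0 Ud0 hrow pU1 pU2 pB1 pB2 u1 u2 b1 b2 a1 a2.
set Ad := mpinv A; set Ud := mpinv U; set Bd := mpinv B.
move=> hBU Ad0 Bd0 BC0 Ud0 hrow pU1 pU2 pB1 pB2 u1 u2 b1 b2 a1 a2.
have idU : Ud *m V *m Ad = Ad - Ud.
  by rewrite eV mulmxBr mulmxBl pU1 a2 -mulmxA -pU2 mulmxA u2.
have idB : Bd *m C *m Ad = Ad - Bd.
  by rewrite eC mulmxBr mulmxBl pB1 a2 -mulmxA -pB2 mulmxA b2.
pose e : 'cV[R]_m := const_mx 1.
have e0 : forall i j, 0 <= e i j by move=> i j; rewrite mxE ler01.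
set T2 := Ud *m V; set T1 := Bd *m C; set N := Ad *m V.
have T20 : forall i j, 0 <= T2 i j by move=> i j; apply: mulmx_ge0R.
have N0 : forall i j, 0 <= N i j by move=> i j; apply: mulmx_ge0R.
have pe : forall i, 0 < (Ud *m e) i ord0 by move=> i; rewrite mul_one_colR.
set x0 := Ad *m e.
have hx0 : T2 *m x0 = x0 - Ud *m e by rewrite /x0 mulmxA idU mulmxBl.
have x0pos : forall i, 0 < x0 i ord0.
  move=> i; have := congr1 (fun X : 'cV[R]_n => X i ord0) hx0.
  rewrite /= mxEsub => h.
  have : 0 <= (T2 *m x0) i ord0 by apply: mulmx_ge0R => // k l; apply: mulmx_ge0R.
  have := pe i; lra.
have part2 : spectral_radius T2 < 1.
  apply: rho_lt => // z hz.
  have := @eig_bound R n T2 x0 (Ud *m e) 1 T20 x0pos _ _ z hz.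
  case.
  - by move=> i; apply: mulmx_ge0R.
  - by move=> i; rewrite mul1r hx0 mxEsub.
  by move=> _ /(_ pe).
split => //.
have [r [r0 [y yn0 hy] hup]] := pf_lite i0 N0.
have lowr : r / (1 + r) <= spectral_radius T2.
  have k : T2 *m (N *m y) = N *m y - T2 *m y by rewrite !mulmxA idU !mulmxBl.
  rewrite hy -scalemxAr in k.
  have hr1 : 1 + r != 0 by rewrite gt_eqF //; lra.
  have k2 : (1 + r) *: (T2 *m y) = r *: y.
    by rewrite scalerDl scale1r k addrC subrK.
  have k3 : T2 *m y = (r / (1 + r)) *: y.
    by rewrite (mulrC r) -scalerA -k2 scalerA mulVf // scale1r.
  have := eig_lower yn0 k3; rewrite ger0_norm // divr_ge0 //; lra.
apply: le_trans lowr; apply/ler_addgt0Pr => eps eps0.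
apply: le_trans (arith3 r0 eps0).
set nu := r + eps.
have rnu : r < nu by rewrite /nu ltrDl.
have nu0 : 0 < nu by lra.
have [x [xpos hx]] := hup nu rnu.
set Z := nu%:M - N.
have hZoff := shift_offd nu N0.
have hZx : forall i, 0 < (Z *m x) i ord0 by move=> i; rewrite shiftZ subr_gt0.
have Zu : Z \in unitmx by apply: (zmx_inj (x := x)).
set y1 := invmx Z *m x0.
have Zy : Z *m y1 = x0 by rewrite /y1 mulKVmx.
have y1ge : forall i, 0 <= y1 i ord0.
  apply: (zmx_nonneg (Z := Z) (x := x)) => // i.
  by rewrite Zy; apply: ltW.
have Zy' : nu *: y1 - N *m y1 = x0 by rewrite -Zy /Z mulmxBl mul_scalar_mx.
have y1pos : forall i, 0 < y1 i ord0.
  move=> i; have := congr1 (fun X : 'cV[R]_n => X i ord0) Zy'.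
  rewrite /= mxEsub mxEscale => h.
  have : 0 <= (N *m y1) i ord0 by apply: mulmx_ge0R => // k l; rewrite ord1; exact: y1ge.
  have := x0pos i => h1 h2.
  have : 0 < nu * y1 i ord0 by lra.
  by rewrite pmulr_rgt0.
set w := nu^-1 *: (V *m y1 + e).
have w0 : forall i j, 0 <= w i j.
  move=> i j; rewrite mxEscale; apply: mulr_ge0; first by rewrite invr_ge0 ltW.
  rewrite mxEadd; apply: addr_ge0; last exact: e0.
  by apply: mulmx_ge0R => // k l; rewrite ord1; exact: y1ge.
have Aw : Ad *m w = y1.
  rewrite /w -scalemxAr mulmxDr mulmxA -/N -/x0.
  have -> : N *m y1 + x0 = nu *: y1 by rewrite -Zy' addrC subrK.
  by rewrite scalerA mulVf ?gt_eqF // scale1r.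
have E1 : T2 *m y1 = y1 - Ud *m w by rewrite -Aw !mulmxA idU mulmxBl.
have E3 : T1 *m y1 = y1 - Bd *m w by rewrite -Aw !mulmxA idB mulmxBl.
have E2 : Ud *m w = nu^-1 *: (T2 *m y1 + Ud *m e).
  by rewrite /w -scalemxAr mulmxDr mulmxA.
have BU : forall i, (Ud *m w) i ord0 <= (Bd *m w) i ord0.
  move=> i; rewrite -subr_ge0.
  have -> : (Bd *m w) i ord0 - (Ud *m w) i ord0 = ((Bd - Ud) *m w) i ord0.
    by rewrite mulmxBl mxEsub.
  exact: mulmx_ge0R.
have bound : forall i, (T1 *m y1) i ord0 <= nu / (1 + nu) * y1 i ord0 - (0 : 'cV[R]_n) i ord0.
  move=> i; rewrite mx0E subr0.
  have h1 := congr1 (fun X : 'cV[R]_n => X i ord0) E1.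
  have h2 := congr1 (fun X : 'cV[R]_n => X i ord0) E2.
  have h3 := congr1 (fun X : 'cV[R]_n => X i ord0) E3.
  move: h1 h2 h3 (BU i) (pe i) => /=.
  rewrite !mxEsub mxEscale mxEadd.
  move: (T2 *m y1) (Ud *m w) (Bd *m w) (T1 *m y1) (Ud *m e) => a u b t p.
  move=> h1 h2 h3 hb hp.
  have : a i ord0 <= nu / (1 + nu) * y1 i ord0.
    apply: (arith4 nu0 (ltW hp)); rewrite -h2; exact: h1.
  lra.
have T10 : forall i j, 0 <= T1 i j by exact: BC0.
apply: rho_le; first by rewrite divr_ge0 //; lra.
move=> z hz.
have [] := @eig_bound R n T1 y1 0 (nu / (1 + nu)) T10 y1pos _ bound z hz => //.
by move=> i; rewrite mx0E.
Qed.
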